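(* Let $e_1,\dots,e_N$ be $N$ entities, each entity $e$ having a utility $U(e)\ge 0$, a perceived relevance (click probability given view) $C(e)\in[0,1]$ and an abandonment probability $\gamma(e)\ge 0$ with $0< C(e)+\gamma(e)\le 1$. For a ranking (ordering) $\langle e_{1},\dots,e_{N}\rangle$ of the entities, define its expected utility $$E(U)=\sum_{i=1}^{N}U(e_i)\,C(e_i)\prod_{j=1}^{i-1}\Big[1-\big(C(e_j)+\gamma(e_j)\big)\Big].$$ Then $E(U)$ is maximized (over all orderings) by placing the entities in descending order of $$CE(e)=\frac{U(e)\,C(e)}{C(e)+\gamma(e)}.$$
   Context: Click model: the user browses the ranked list from top to bottom; having viewed the entity at position $i$, the user clicks it with probability $C(e_i)$, abandons browsing with probability $\gamma(e_i)$, and otherwise proceeds to the next entity. Hence the click probability of the entity at position $i$ is $C(e_i)\prod_{j<i}[1-(C(e_j)+\gamma(e_j))]$, and $E(U)$ is the expected total utility of clicked entities. *)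

(* Defs.v *)
From mathcomp Require Import all_boot all_order all_algebra all_fingroup.
Set Implicit Arguments. Unset Strict Implicit. Unset Printing Implicit Defensive.
Import Order.TTheory GRing.Theory Num.Theory.
Local Open Scope ring_scope.

(* Entities are indexed by 'I_N.  A ranking is a permutation s : 'S_N;
   position i (0-based) holds entity s i. *)

Definition EU (R : realFieldType) (N : nat) (U C g : 'I_N -> R) (s : 'S_N) : R :=
  \sum_(i < N) (U (s i) * C (s i) *
     \prod_(j < N | (j < i)%N) (1 - (C (s j) + g (s j)))).

Definition CE (R : realFieldType) (N : nat) (U C g : 'I_N -> R) (e : 'I_N) : R :=
  U e * C e / (C e + g e).

(* Main.v *)
Require Import Defs.
From mathcomp Require Import all_boot all_order all_algebra all_fingroup.
From mathcomp Require Import ring lra.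
Import Order.TTheory GRing.Theory Num.Theory.
Local Open Scope ring_scope.

Fixpoint fl (R : realFieldType) (T : Type) (a p : T -> R) (l : seq T) : R :=
  if l is x :: l' then a x + p x * fl R T a p l' else 0.
Arguments fl {R T} a p l.

Lemma move_front (R : realFieldType) (T : Type) (a p r : T -> R)
  (hp : forall x, 0 <= p x)
  (hsw : forall x y, r y <= r x -> a y + p y * a x <= a x + p x * a y)
  (y : T) (m2 m1 : seq T) :
  all (fun x => r y <= r x) m1 -> fl a p (y :: m1 ++ m2) <= fl a p (m1 ++ y :: m2).
Proof.
elim: m1 => [|x m1 IH] //= /andP[hx hall].
have := IH hall => /= H.
have H2 : p x * (a y + p y * fl a p (m1 ++ m2)) <= p x * fl a p (m1 ++ y :: m2).
  by apply: ler_wpM2l.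
have H3 := hsw _ _ hx.
move: H2 H3.
move: (fl a p (m1 ++ m2)) (fl a p (m1 ++ y :: m2)) => F G H2 H3.
have E1 : a y + p y * (a x + p x * F) = (a y + p y * a x) + p x * p y * F by ring.
have E2 : a x + p x * (a y + p y * F) = (a x + p x * a y) + p x * p y * F by ring.
have H4 : a x + p x * (a y + p y * F) <= a x + p x * G by rewrite lerD2l.
rewrite E1; apply: le_trans H4.
by rewrite E2 lerD2r.
Qed.

Lemma main_list (R : realFieldType) (T : eqType) (a p r : T -> R)
  (hp : forall x, 0 <= p x)
  (hsw : forall x y, r y <= r x -> a y + p y * a x <= a x + p x * a y) :
  forall l' l : seq T, pairwise (fun x y => r y <= r x) l -> perm_eq l' l ->
  fl a p l' <= fl a p l.
Proof.
elim=> [|y l'' IH] l hpw hperm.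
  by rewrite perm_sym in hperm; move/perm_nilP: hperm => ->.
have : y \in l by rewrite -(perm_mem hperm) mem_head.
move=> Hy; move: hpw hperm; case/splitPr: Hy => m1 m2 hpw hperm.
move: hpw; rewrite pairwise_cat allrel_consr pairwise_cons => /and3P[/andP[hm1 hrel] hpw1 /andP[hm2 hpw2]].
have hperm' : perm_eq l'' (m1 ++ m2).
  have hc : perm_eq (m1 ++ y :: m2) (y :: m1 ++ m2) by rewrite (perm_catCA m1 [:: y] m2).
  by rewrite -(perm_cons y); apply: perm_trans hperm hc.
have hpw' : pairwise (fun x y => r y <= r x) (m1 ++ m2).
  by rewrite pairwise_cat hpw1 hpw2 hrel.
apply: le_trans (@move_front R T a p r hp hsw y m2 m1 hm1).
by rewrite /= lerD2l ler_wpM2l // IH.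
Qed.

Lemma fl_mkseq (R : realFieldType) (T : Type) (a p : T -> R) n :
  forall F : nat -> T,
  fl a p (mkseq F n) = \sum_(i < n) a (F i) * \prod_(j < n | (j < i)%N) p (F j).
Proof.
elim: n => [|n IH] F; first by rewrite big_ord0.
have -> : mkseq F n.+1 = F 0%N :: mkseq (fun k => F k.+1) n.
  by rewrite /mkseq /= -add1n iotaDl -map_comp.
rewrite /= IH big_ord_recl /=.
rewrite [X in a _ * X]big1 ?mulr1; last by move=> j; rewrite ltn0.
congr (_ + _); rewrite mulr_sumr; apply: eq_bigr => i _.
rewrite [in RHS]big_mkcond big_ord_recl /= mulrCA; congr (_ * (_ * _)).
by rewrite big_mkcond /=; apply: eq_bigr.
Qed.

Theorem theorem1 (R : realFieldType) (N : nat) (U C g : 'I_N -> R)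
  (hU : forall e, 0 <= U e)
  (hC : forall e, 0 <= C e <= 1)
  (hg : forall e, 0 <= g e)
  (hCg : forall e, 0 < C e + g e <= 1)
  (s : 'S_N)
  (hdesc : forall i j : 'I_N, (i <= j)%N -> CE U C g (s j) <= CE U C g (s i)) :
  forall t : 'S_N, EU U C g t <= EU U C g s.
Proof.
move=> t.
case: N U C g hU hC hg hCg s hdesc t => [|n] U C g hU hC hg hCg s hdesc t.
  by rewrite /EU !big_ord0.
pose a e := U e * C e.
pose p e := 1 - (C e + g e).
pose r e := CE U C g e.
have hp : forall x, 0 <= p x.
  by move=> x; rewrite /p subr_ge0; case/andP: (hCg x).
have hsw : forall x y, r y <= r x -> a y + p y * a x <= a x + p x * a y.
  move=> x y; rewrite /r /CE /a /p.
  have qx := hCg x; have qy := hCg y.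
  case/andP: qx => qx _; case/andP: qy => qy _.
  have ex : U x * C x = (U x * C x / (C x + g x)) * (C x + g x).
    by rewrite divfK // gt_eqF.
  have ey : U y * C y = (U y * C y / (C y + g y)) * (C y + g y).
    by rewrite divfK // gt_eqF.
  move=> h; rewrite [in X in _ <= X]ex [in X in _ <= X]ey [in X in X <= _]ex [in X in X <= _]ey.
  move: (U x * C x / (C x + g x)) (U y * C y / (C y + g y)) h => rx ry h.
  move: (C x + g x) (C y + g y) qx qy => Qx Qy qx qy.
  have hh : 0 <= Qx * Qy * (rx - ry) by rewrite mulr_ge0 ?subr_ge0 // mulr_ge0 // ltW.
  nra.
have EUmk : forall u : 'S_n.+1, EU U C g u = fl a p (mkseq (fun k => u (inord k)) n.+1).
  move=> u; rewrite fl_mkseq /EU; apply: eq_bigr => i _.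
  rewrite inord_val /a; congr (_ * _); apply: eq_bigr => j _.
  by rewrite inord_val.
rewrite !EUmk.
apply: (@main_list R _ a p r hp hsw).
- apply/(pairwiseP (s ord0)) => i j; rewrite !inE size_mkseq => hi hj hij.
  rewrite !nth_mkseq //; apply: hdesc.
  by rewrite !inordK // ltnW.
- have allin : forall u : 'S_n.+1, forall x : 'I_n.+1, x \in mkseq (fun k => u (inord k)) n.+1.
    move=> u x; apply/mapP; exists (val (u^-1 x)%g); first by rewrite mem_iota /=.
    by rewrite inord_val permKV.
  have un : forall u : 'S_n.+1, uniq (mkseq (fun k => u (inord k)) n.+1).
    move=> u; rewrite map_inj_in_uniq ?iota_uniq // => i j hi hj /perm_inj.
    rewrite !mem_iota /= in hi hj => /(congr1 val).
    by rewrite /= (inordK hi) (inordK hj).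
  apply: uniq_perm; [exact: un|exact: un|]. move=> x. by rewrite (allin t x) (allin s x).
Qed.
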